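(* Let $\mathcal{H}$ be a $d$-dimensional Hilbert space, let $\mathcal{D}(\mathcal{H})$ denote the set of density operators on $\mathcal{H}$, and let $\mathcal{H}_{\mathrm{anc}}\cong\mathcal{H}$ be the Hilbert space of an ancillary system. Suppose the classical pure states $\{|\chi_i\rangle\}_{i=1}^d\subset\mathcal{H}$ form a linearly independent set spanning $\mathcal{H}$. Then there exists an isometry $\Gamma:\mathcal{H}\to\mathcal{H}\otimes\mathcal{H}_{\mathrm{anc}}$ such that for every $\rho\in\mathcal{D}(\mathcal{H})$, $$\mathrm{NN}(\rho)=\mathrm{SN}(\Gamma\rho\Gamma^\dagger),$$ where the Schmidt number is taken with respect to the bipartition $\mathcal{H}\,|\,\mathcal{H}_{\mathrm{anc}}$.
   Context: Given a finite set of ''classical'' pure states $\{|\chi_i\rangle\}$ spanning $\mathcal{H}$, the nonclassical rank of a pure state $|\psi\rangle$ is $\mathrm{NR}(|\psi\rangle)=\min\{r : |\psi\rangle=\sum_{i=1}^r c_i|\chi_i\rangle,\ c_i\in\mathbb{C}\setminus\{0\}\}$ (the minimal number of classical states needed to write $|\psi\rangle$ as a superposition). The nonclassical number of a mixed state is $\mathrm{NN}(\rho)=\min_{\{p_i,|\psi_i\rangle\}}\max_i \mathrm{NR}(|\psi_i\rangle)$, the minimum being over all pure-state convex decompositions $\rho=\sum_i p_i|\psi_i\rangle\langle\psi_i|$. The Schmidt number of a bipartite state is $\mathrm{SN}(\rho)=\min_{\{p_i,|\psi_i\rangle\}}\max_i\mathrm{SR}(|\psi_i\rangle)$, with $\mathrm{SR}$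 the Schmidt rank and the minimum over pure-state decompositions of $\rho$. *)

(* Defs.v *)
(* Hilbert spaces are C^n over algC (the algebraic complex
   numbers, a numClosedFieldType with conjugation). *)
From HB Require Import structures.
From mathcomp Require Import all_boot all_order all_algebra all_field.
From Stdlib Require Import ClassicalEpsilon.
Set Implicit Arguments. Unset Strict Implicit. Unset Printing Implicit Defensive.
Import Order.TTheory GRing.Theory Num.Theory.
Local Open Scope ring_scope.

Definition adj (m n : nat) (A : 'M[algC]_(m, n)) : 'M[algC]_(n, m) :=
  (map_mx Num.conj A)^T.

(* least natural number satisfying P (meaningful when such a number exists) *)
Definition minnat (P : nat -> Prop) : nat :=
  epsilon (inhabits 0%N) (fun k => P k /\ forall j, P j -> (k <= j)%N).

Definition psd (n : nat) (A : 'M[algC]_n) : Prop :=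
  A = adj A /\ forall x : 'cV[algC]_n, 0 <= (adj x *m A *m x) 0 0.

Definition density (n : nat) (rho : 'M[algC]_n) : Prop :=
  psd rho /\ \tr rho = 1.

Definition unit_vec (n : nat) (v : 'cV[algC]_n) : Prop := adj v *m v = 1%:M.

Definition pure_decomp (n m : nat) (rho : 'M[algC]_n)
    (p : 'I_m -> algC) (psi : 'I_m -> 'cV[algC]_n) : Prop :=
  (forall k, 0 < p k) /\ (forall k, unit_vec (psi k)) /\
  rho = \sum_(k < m) p k *: (psi k *m adj (psi k)).

Definition NR (d n : nat) (chi : 'I_d -> 'cV[algC]_n) (psi : 'cV[algC]_n) : nat :=
  minnat (fun r => exists S : {set 'I_d}, #|S| = r /\
     exists c : 'I_d -> algC, (forall i, i \in S -> c i != 0) /\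
       psi = \sum_(i in S) c i *: chi i).

Definition NN (d n : nat) (chi : 'I_d -> 'cV[algC]_n) (rho : 'M[algC]_n) : nat :=
  minnat (fun k => exists m (p : 'I_m -> algC) (psi : 'I_m -> 'cV[algC]_n),
     pure_decomp rho p psi /\ k = (\max_(j < m) NR chi (psi j))%N).

(* Schmidt rank of a vector of C^n (x) C^a (index i of C^(n*a) corresponds to
   the pair given by mxvec_index): rank of its coefficient matrix *)
Definition SR (n a : nat) (psi : 'cV[algC]_(n * a)) : nat :=
  \rank (vec_mx (psi^T) : 'M[algC]_(n, a)).

Definition SN (n a : nat) (sigma : 'M[algC]_(n * a)) : nat :=
  minnat (fun k => exists m (p : 'I_m -> algC) (psi : 'I_m -> 'cV[algC]_(n * a)),
     pure_decomp sigma p psi /\ k = (\max_(j < m) SR (psi j))%N).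

(* Main.v *)
Require Import Defs.
From HB Require Import structures.
From mathcomp Require Import all_boot all_order all_algebra all_field.
Import Order.TTheory GRing.Theory Num.Theory.
Local Open Scope ring_scope.
From Stdlib Require Import ClassicalEpsilon FunctionalExtensionality PropExtensionality.
Set Implicit Arguments. Unset Strict Implicit. Unset Printing Implicit Defensive.

Lemma adjE m n (A : 'M[algC]_(m, n)) i j : adj A i j = (A j i)^*.
Proof. by rewrite /adj !mxE. Qed.

Lemma adj_mul m n p (A : 'M[algC]_(m, n)) (B : 'M[algC]_(n, p)) :
  adj (A *m B) = adj B *m adj A.
Proof. by rewrite /adj map_mxM trmx_mul. Qed.

Lemma adjK m n (A : 'M[algC]_(m, n)) : adj (adj A) = A.
Proof. by apply/matrixP => i j; rewrite !adjE conjCK. Qed.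

Lemma adjD m n (A B : 'M[algC]_(m, n)) : adj (A + B) = adj A + adj B.
Proof. by apply/matrixP => i j; rewrite !mxE rmorphD. Qed.

Lemma adjZ m n (a : algC) (A : 'M[algC]_(m, n)) : adj (a *: A) = a^* *: adj A.
Proof. by apply/matrixP => i j; rewrite !mxE rmorphM. Qed.

Lemma adj_one n : adj (1%:M : 'M[algC]_n) = 1%:M.
Proof. by apply/matrixP => i j; rewrite !mxE eq_sym; case: eqP; rewrite ?conjC1 ?conjC0. Qed.

Lemma adj_tstar m n (A : 'M[algC]_(m, n)) : adj A = (A ^t* )%sesqui.
Proof. by rewrite /adj map_trmx. Qed.

Lemma normv_ge0 n (x : 'cV[algC]_n) : 0 <= (adj x *m x) 0 0.
Proof.
rewrite mxE; apply: sumr_ge0 => k _; rewrite adjE mulrC -normCK.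
by rewrite exprn_ge0.
Qed.

Lemma normv_eq0 n (x : 'cV[algC]_n) : ((adj x *m x) 0 0 == 0) = (x == 0).
Proof.
apply/idP/idP; last by move/eqP->; rewrite mulmx0 mxE.
rewrite mxE => /eqP /psumr_eq0P H.
have {}H : forall k, adj x 0 k * x k 0 = 0.
  by move=> k; apply: H => // i _; rewrite adjE mulrC -normCK exprn_ge0.
apply/eqP/matrixP => k j; rewrite (ord1 j) mxE.
by move/eqP: (H k); rewrite adjE mulrC -normCK expf_eq0 /= normr_eq0 => /eqP.
Qed.

Lemma herm_spectral n (P : 'M[algC]_n) : adj P = P ->
  exists (U : 'M[algC]_n) (l : 'rV[algC]_n),
    [/\ adj U *m U = 1%:M, U *m adj U = 1%:M & P = adj U *m diag_mx l *m U].
Proof.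
move=> hP.
have Pn : P \is normalmx by apply/normalmxP; rewrite -adj_tstar hP.
have /orthomx_spectralP E := Pn.
have Uu := spectral_unitarymx P.
exists (spectralmx P), (spectral_diag P).
have h1 : spectralmx P *m adj (spectralmx P) = 1%:M.
  by rewrite adj_tstar; apply/unitarymxP.
split => //; first exact: mulmx1C.
by rewrite {1}E invmx_unitary // -adj_tstar.
Qed.

Lemma adj_delta m n (i : 'I_m) (j : 'I_n) :
  adj (delta_mx i j : 'M[algC]_(m, n)) = delta_mx j i.
Proof.
apply/matrixP => a b; rewrite adjE !mxE.
by case: (a == j); case: (b == i); rewrite /= ?conjC1 ?conjC0.
Qed.

Lemma delta_sandwich n (A : 'M[algC]_n) i :
  ((delta_mx (0 : 'I_1) i : 'rV[algC]_n) *m A *m delta_mx i (0 : 'I_1)) 0 0 = A i i.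
Proof. by rewrite -rowE -colE !mxE. Qed.

Lemma pd_eig n (U : 'M[algC]_n) (l : 'rV[algC]_n) (P : 'M[algC]_n) :
  adj U *m U = 1%:M -> U *m adj U = 1%:M -> P = adj U *m diag_mx l *m U ->
  (forall x : 'cV_n, x != 0 -> 0 < (adj x *m P *m x) 0 0) ->
  forall i, 0 < l 0 i.
Proof.
move=> h1 h2 hP pd i.
pose x : 'cV_n := adj U *m delta_mx i (0 : 'I_1).
have ax : adj x = delta_mx 0 i *m U by rewrite /x adj_mul adjK adj_delta.
have xn0 : x != 0.
  apply/negP => /eqP x0.
  have : (adj x *m x) 0 0 = 1.
    rewrite ax /x mulmxA -(mulmxA _ U) h2 mulmx1.
    by rewrite mul_delta_mx mxE !eqxx.
  by rewrite x0 mulmx0 mxE => /eqP; rewrite eq_sym oner_eq0.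
have := pd x xn0; rewrite ax hP /x.
have K : forall m (A : 'M[algC]_(m, n)), A *m U *m adj U = A.
  by move=> m A; rewrite -mulmxA h2 mulmx1.
rewrite !mulmxA !K.
by rewrite delta_sandwich mxE eqxx mulr1n.
Qed.

Lemma diag_sqrt_factor n (U : 'M[algC]_n) (l : 'rV[algC]_n) :
  U *m adj U = 1%:M -> (forall i, 0 < l 0 i) ->
  exists Z : 'M[algC]_n, Z \in unitmx /\ adj Z *m Z = adj U *m diag_mx l *m U.
Proof.
move=> h2 lpos.
pose s : 'rV[algC]_n := \row_i sqrtC (l 0 i).
exists (diag_mx s *m U); split.
  rewrite unitmx_mul; apply/andP; split.
    rewrite unitmxE det_diag unitfE; apply/prodf_neq0 => i _.
    by rewrite mxE sqrtC_eq0 gt_eqF.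
  by case: (mulmx1_unit h2).
rewrite adj_mul !mulmxA; congr (_ *m _); rewrite -mulmxA; congr (_ *m _).
apply/matrixP => a b; rewrite mul_mx_diag !mxE.
case: (a =P b) => [->|]; rewrite ?eqxx ?mulr1n ?mulr0n ?conjC0 ?mul0r //; last by move=> ne; rewrite eq_sym (negbTE (introN eqP ne)) mulr0n conjC0 mul0r.
rewrite conj_Creal; last by apply: ger0_real; rewrite sqrtC_ge0 ltW.
by rewrite -expr2 sqrtCK.
Qed.


Lemma minnat_eq (P : nat -> Prop) k :
  P k -> (forall j, P j -> (k <= j)%N) -> minnat P = k.
Proof.
move=> Pk kmin; rewrite /minnat.
have ex : exists x, P x /\ forall j, P j -> (x <= j)%N by exists k.
have [Pm mmin] := epsilon_spec (inhabits 0%N) _ ex.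
apply/eqP; rewrite eqn_leq; apply/andP; split; [exact: mmin | exact: kmin].
Qed.

Lemma minnat_ext (P Q : nat -> Prop) : (forall k, P k <-> Q k) -> minnat P = minnat Q.
Proof.
move=> h; have -> // : P = Q.
by apply: functional_extensionality => k; apply: propositional_extensionality.
Qed.

Definition Xmat d (chi : 'I_d -> 'cV[algC]_d) : 'M[algC]_d := \matrix_(r, i) chi i r 0.

Lemma Xmat_mul d (chi : 'I_d -> 'cV[algC]_d) (c : 'cV[algC]_d) :
  Xmat chi *m c = \sum_i c i 0 *: chi i.
Proof.
apply/matrixP => r j; rewrite (ord1 j) !mxE summxE.
by apply: eq_bigr => i _; rewrite !mxE mulrC.
Qed.

Lemma Xmat_unit d (chi : 'I_d -> 'cV[algC]_d) :
  row_free (\matrix_(i < d) (chi i)^T) -> Xmat chi \in unitmx.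
Proof.
rewrite row_free_unit; have -> : \matrix_(i < d) (chi i)^T = (Xmat chi)^T.
  by apply/matrixP => i j; rewrite !mxE.
by rewrite unitmx_tr.
Qed.

Lemma NR_coord d (chi : 'I_d -> 'cV[algC]_d) (psi : 'cV[algC]_d) :
  Xmat chi \in unitmx ->
  NR chi psi = #|[set i | (invmx (Xmat chi) *m psi) i 0 != 0]|.
Proof.
move=> Xu; set c := invmx (Xmat chi) *m psi.
have psiE : psi = Xmat chi *m c by rewrite /c mulKVmx.
apply: minnat_eq.
  exists [set i | c i 0 != 0]; split => //; exists (fun i => c i 0); split.
    by move=> i; rewrite inE.
  rewrite {1}psiE Xmat_mul (bigID (fun i => i \in [set i | c i 0 != 0])) /=.
  rewrite [X in _ + X]big1 ?addr0 // => i; rewrite inE negbK => /eqP ->.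
  by rewrite scale0r.
move=> j [S [<- [c' [c'nz psiS]]]].
pose c'' : 'cV[algC]_d := \col_i (if i \in S then c' i else 0).
have : Xmat chi *m c'' = psi.
  rewrite Xmat_mul psiS [RHS]big_mkcond /=; apply: eq_bigr => i _.
  by rewrite mxE; case: (i \in S); rewrite ?scale0r.
rewrite psiE => /(congr1 (mulmx (invmx (Xmat chi)))); rewrite !mulKmx // => ec.
suff -> : [set i | c i 0 != 0] = S by [].
apply/setP => i; rewrite inE -ec mxE; case: ifP => iS; first exact: c'nz.
by rewrite eqxx.
Qed.

Lemma rank_diag n (c : 'rV[algC]_n) :
  \rank (diag_mx c) = #|[set i | c 0 i != 0]|.
Proof.
have E : (diag_mx c :=: \sum_(i | c 0 i != 0) <<delta_mx 0 i : 'rV[algC]_n>>)%MS.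
  apply/eqmxP/andP; split.
    apply/row_subP => i; rewrite row_diag_mx.
    have [->|nz] := eqVneq (c 0 i) 0; first by rewrite scale0r sub0mx.
    by apply: scalemx_sub; apply: (sumsmx_sup i) => //; rewrite genmxE.
  apply/sumsmx_subP => i nz; rewrite genmxE.
  have -> : (delta_mx 0 i : 'rV[algC]_n) = (c 0 i)^-1 *: row i (diag_mx c).
    by rewrite row_diag_mx scalerA mulVf // scale1r.
  by apply: scalemx_sub; apply: row_sub.
rewrite E.
have /mxdirectP -> := @mxdirect_delta algC _ (fun i => c 0 i != 0) n id (in2W (@inj_id _)).
rewrite /= -sum1_card; apply: eq_big => [i|i _]; first by rewrite inE.
by rewrite mxrank_gen mxrank_delta.
Qed.
Lemma choose_delta n (l : 'rV[algC]_n) : (forall i, 0 < l 0 i) ->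
  exists dl : algC, [/\ 0 < dl, dl < 1 & forall i, dl < l 0 i].
Proof.
move=> lpos.
set S := \sum_i (l 0 i)^-1.
have S0 : 0 <= S by apply: sumr_ge0 => i _; rewrite invr_ge0 ltW.
have T0 : 0 < 2 + S by apply: ltr_wpDr.
exists (2 + S)^-1; split.
- by rewrite invr_gt0.
- rewrite -[X in _ < X]invr1 ltf_pV2 ?posrE //.
  by apply: ltr_wpDr => //; rewrite ltr1n.
- move=> i; rewrite -[X in _ < X]invrK ltf_pV2 ?posrE ?invr_gt0 //.
  rewrite /S (bigD1 i) //= addrA ltr_wpDr //; last by rewrite ltrDr.
  by apply: sumr_ge0 => j _; rewrite invr_ge0 ltW.
Qed.

Lemma pos_of_norm n (x : 'cV[algC]_n) : x != 0 -> 0 < (adj x *m x) 0 0.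
Proof. by move=> nz; rewrite lt_def normv_eq0 nz normv_ge0. Qed.

Lemma rank_unit_l m n (A : 'M[algC]_m) (B : 'M[algC]_(m, n)) :
  A \in unitmx -> \rank (A *m B) = \rank B.
Proof.
move=> Au; rewrite -mxrank_tr trmx_mul mxrankMfree ?mxrank_tr //.
by rewrite row_free_unit unitmx_tr.
Qed.

Definition Ymat d (Za Zb : 'M[algC]_d) : 'M[algC]_(d * d, d) :=
  \matrix_(k, i) mxvec (col i Za *m (col i Zb)^T) 0 k.

Lemma Ymat_entry d (Za Zb : 'M[algC]_d) r s i :
  Ymat Za Zb (mxvec_index r s) i = Za r i * Zb s i.
Proof.
rewrite mxE mxvecE mxE big_ord1 !mxE //.
Qed.

Lemma Ymat_gram d (Za Zb : 'M[algC]_d) :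
  adj (Ymat Za Zb) *m Ymat Za Zb =
  \matrix_(i, j) ((adj Za *m Za) i j * (adj Zb *m Zb) i j).
Proof.
apply/matrixP => i j; rewrite !mxE.
rewrite (reindex _ (curry_mxvec_bij _ _)) /=.
transitivity (\sum_r \sum_s adj (Ymat Za Zb) i (mxvec_index r s) * Ymat Za Zb (mxvec_index r s) j).
  by rewrite pair_big /=; apply: eq_bigr => -[r s] _.
rewrite mulr_suml; apply: eq_bigr => r _.
rewrite mulr_sumr; apply: eq_bigr => s _.
rewrite !adjE !Ymat_entry rmorphM /=.
by rewrite mulrACA.
Qed.

Lemma Ymat_vec d (Za Zb : 'M[algC]_d) (c : 'cV[algC]_d) :
  vec_mx ((Ymat Za Zb *m c)^T) = Za *m diag_mx c^T *m Zb^T.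
Proof.
apply/matrixP => r s; rewrite !mxE.
apply: eq_bigr => i _; rewrite Ymat_entry mul_mx_diag !mxE.
by rewrite mulrAC.
Qed.

Lemma core d (chi : 'I_d -> 'cV[algC]_d) :
  (forall i, unit_vec (chi i)) -> Xmat chi \in unitmx ->
  exists Gamma : 'M[algC]_(d * d, d),
    adj Gamma *m Gamma = 1%:M /\ forall psi, SR (Gamma *m psi) = NR chi psi.
Proof.
move=> chi_state Xu.
set X := Xmat chi; set G := adj X *m X.
have Gii : forall i, G i i = 1.
  move=> i; have E1 : (adj (chi i) *m chi i) 0 0 = 1.
    by rewrite (chi_state i) mxE eqxx.
  rewrite -E1 !mxE; apply: eq_bigr => r _; rewrite !adjE !mxE //.
have Gh : adj G = G by rewrite /G adj_mul adjK.
have Gpd : forall x : 'cV_d, x != 0 -> 0 < (adj x *m G *m x) 0 0.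
  move=> x nz; rewrite /G mulmxA -adj_mul -mulmxA; apply: pos_of_norm.
  apply/negP => /eqP Xx0; move/negP: nz; apply.
  by rewrite -(mulKmx Xu x) Xx0 mulmx0.
have [U [l [h1 h2 GE]]] := herm_spectral Gh.
have lpos := pd_eig h1 h2 GE Gpd.
have [dl [dl0 dl1 dll]] := choose_delta lpos.
set e := dl / (1 - dl).
have dl1' : 0 < 1 - dl by rewrite subr_gt0.
have e0 : 0 < e by rewrite divr_gt0.
have key : (1 - dl) * (1 + e) = 1.
  by rewrite /e mulrDr mulr1 mulrCA divff ?mulr1 ?subrK // gt_eqF.
have [Za [Zau ZaE]] : exists Za : 'M[algC]_d, Za \in unitmx /\ adj Za *m Za = G - dl%:M.
  have [Za [Zau ZaE]] := @diag_sqrt_factor d U (l - const_mx dl) h2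
    (fun i => ltac:(by rewrite !mxE subr_gt0)).
  exists Za; split => //; rewrite ZaE linearB /= diag_const_mx.
  rewrite mulmxBr mulmxBl -GE mul_mx_scalar -scalemxAl h1.
  by rewrite scalemx1.
set B : 'M[algC]_d := const_mx 1 + e%:M.
have Bh : adj B = B.
  apply/matrixP => i j; rewrite adjE /B [in LHS]mxE [in RHS]mxE.
  rewrite (mxE _ (fun _ _ => 1)) (mxE _ (fun _ _ => 1)) ![e%:M _ _]mxE.
  rewrite rmorphD /= conjC1 rmorphMn /= (eq_sym j i) conj_Creal //.
  exact: ger0_real (ltW e0).
have Bpd : forall x : 'cV_d, x != 0 -> 0 < (adj x *m B *m x) 0 0.
  move=> x nz; rewrite /B mulmxDr mulmxDl mxE.
  apply: ltr_wpDl; last first.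
    by rewrite mul_mx_scalar -scalemxAl mxE mulr_gt0 // pos_of_norm.
  pose o : 'cV[algC]_d := const_mx 1.
  have -> : (const_mx 1 : 'M[algC]_d) = o *m adj o.
    apply/matrixP => i j; rewrite !mxE big_ord1 !mxE conjC1 mulr1 //.
  have -> : adj x *m (o *m adj o) *m x = adj (adj o *m x) *m (adj o *m x).
    by rewrite adj_mul adjK !mulmxA.
  exact: normv_ge0.
have [V [mu [k1 k2 BE]]] := herm_spectral Bh.
have mupos := pd_eig k1 k2 BE Bpd.
have [Zb [Zbu ZbE]] := diag_sqrt_factor k2 mupos.
rewrite -BE in ZbE.
set Y := Ymat Za Zb.
have YG : adj Y *m Y = G.
  rewrite Ymat_gram ZaE ZbE; apply/matrixP => i j; rewrite mxE [(G - _) i j]mxE /B [(const_mx 1 + _) i j]mxE (mxE _ (fun _ _ => 1)) ![_%:M _ _]mxE.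
  rewrite [(- dl%:M) i j]mxE [dl%:M i j]mxE.
  have [->|ne] := eqVneq i j; first by rewrite Gii !mulr1n.
  by rewrite !mulr0n subr0 addr0 mulr1.
exists (Y *m invmx X); split.
  rewrite adj_mul mulmxA -(mulmxA _ (adj Y)) YG /G.
  rewrite mulmxA -adj_mul -mulmxA mulmxV //.
  by rewrite adj_one mul1mx.
move=> psi; rewrite /SR -mulmxA Ymat_vec mxrankMfree; last first.
  by rewrite row_free_unit unitmx_tr.
rewrite rank_unit_l // rank_diag NR_coord //; apply: eq_card => i; rewrite !inE !mxE //.
Qed.

Lemma tr_rank1 n (v : 'cV[algC]_n) : \tr (v *m adj v) = (adj v *m v) 0 0.
Proof. by rewrite mxtrace_mulC /mxtrace big_ord1. Qed.

Lemma in_range N n (Gamma : 'M[algC]_(N, n)) (rho : 'M[algC]_n) m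
  (p : 'I_m -> algC) (phi : 'I_m -> 'cV[algC]_N) :
  adj Gamma *m Gamma = 1%:M ->
  (forall k, 0 < p k) ->
  Gamma *m rho *m adj Gamma = \sum_(k < m) p k *: (phi k *m adj (phi k)) ->
  forall k, Gamma *m (adj Gamma *m phi k) = phi k.
Proof.
move=> iso ppos sigE.
set Pm : 'M[algC]_N := 1%:M - Gamma *m adj Gamma.
have PG : Pm *m Gamma = 0 by rewrite /Pm mulmxBl mul1mx -mulmxA iso mulmx1 subrr.
have E : \sum_(k < m) p k * (adj (Pm *m phi k) *m (Pm *m phi k)) 0 0 = 0.
  have := congr1 (fun M => \tr (Pm *m M *m adj Pm)) sigE => /=.
  rewrite !mulmxA PG !mul0mx mxtrace0 => /esym.
  rewrite mulmx_sumr mulmx_suml raddf_sum /= => h; rewrite -[RHS]h.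
  apply: eq_bigr => k _.
  rewrite -scalemxAr -scalemxAl mxtraceZ -tr_rank1 adj_mul !mulmxA.
  by congr (_ * \tr _); rewrite -!mulmxA.
have H := psumr_eq0P (fun k _ => mulr_ge0 (ltW (ppos k)) (normv_ge0 _)) E.
move=> k; have /eqP := H k isT.
rewrite mulf_eq0 gt_eqF //= normv_eq0 /Pm mulmxBl mul1mx subr_eq0 => /eqP.
by rewrite mulmxA.
Qed.

Theorem proposition1 (d : nat) (chi : 'I_d -> 'cV[algC]_d)
  (chi_state : forall i, unit_vec (chi i))
  (chi_indep : row_free (\matrix_(i < d) (chi i)^T)) :
  exists Gamma : 'M[algC]_(d * d, d),
    adj Gamma *m Gamma = 1%:M /\
    forall rho : 'M[algC]_d, density rho ->
      NN chi rho = SN (Gamma *m rho *m adj Gamma : 'M[algC]_(d * d)).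
Proof.
have Xu := Xmat_unit chi_indep.
have [Gamma [iso SRNR]] := core chi_state Xu.
exists Gamma; split => // rho _.
rewrite /NN /SN; apply: minnat_ext => k; split.
- case=> m [p [psi [[ppos [punit rhoE]] ->]]].
  exists m, p, (fun j => Gamma *m psi j); split.
    split => //; split.
      move=> j; rewrite /unit_vec adj_mul mulmxA -(mulmxA (adj _)) iso mulmx1.
      exact: punit j.
    rewrite rhoE mulmx_sumr mulmx_suml; apply: eq_bigr => j _.
    by rewrite -scalemxAr -scalemxAl adj_mul !mulmxA.
  by apply: eq_bigr => j _; rewrite SRNR.
- case=> m [p [phi [[ppos [punit sigE]] ->]]].
  have range := in_range iso ppos sigE.
  exists m, p, (fun j => adj Gamma *m phi j); split.
    split => //; split.
      move=> j; rewrite /unit_vec adj_mul adjK -mulmxA range; exact: punit j.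
    have -> : rho = adj Gamma *m (Gamma *m rho *m adj Gamma) *m Gamma.
      by rewrite !mulmxA iso mul1mx -mulmxA iso mulmx1.
    rewrite sigE mulmx_sumr mulmx_suml; apply: eq_bigr => j _.
    by rewrite -scalemxAr -scalemxAl adj_mul adjK !mulmxA.
  by apply: eq_bigr => j _; rewrite -SRNR range.
Qed.
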